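(* Let $m\le n$ and let $g:\mathbb{R}^n\to\mathbb{R}^m$ have components $g_i(x)=\frac12(A_ix,x)+(b_i,x)$, $i=1,\dots,m$, with symmetric $A_i\in\mathbb{R}^{n\times n}$ and $b_i\in\mathbb{R}^n$. Let $H\in\mathbb{R}^{m\times n}$ be the matrix with rows $b_i^T$, assume $H$ has rank $m$, and let $\mu_0>0$ be its smallest singular value. Let $L>0$ satisfy $\|g'(x)-g'(x')\|_2\le L\|x-x'\|_2$ for all $x,x'\in\mathbb{R}^n$. Then for every $y\in\mathbb{R}^m$ with $\|y\|_2<\frac{\mu_0^2}{4L}$ the equation $g(x)=y$ has a solution $x^*(y)$ with $\|x^*(y)\|_2\le\frac{\mu_0}{2L}$.
   Context: All norms are Euclidean; for matrices $\|\cdot\|_2$ is the spectral (operator) norm. $g'(x)$ is the $m\times n$ Jacobian with rows $(A_ix+b_i)^T$. *)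

(* Defs.v *)
From HB Require Import structures.
From mathcomp Require Import all_boot all_order all_algebra.
From mathcomp Require Import classical_sets reals.
Set Implicit Arguments. Unset Strict Implicit. Unset Printing Implicit Defensive.
Import Order.TTheory GRing.Theory Num.Theory.
Local Open Scope ring_scope.
Local Open Scope classical_set_scope.

Definition vnorm (R : realType) (k : nat) (v : 'cV[R]_k) : R :=
  Num.sqrt (\sum_(i < k) v i 0 ^+ 2).

Definition spnorm (R : realType) (p q : nat) (M : 'M[R]_(p, q)) : R :=
  sup [set r | exists v : 'cV[R]_q, vnorm v <= 1 /\ r = vnorm (M *m v)].

Definition quadmap (R : realType) (m n : nat)
  (A : 'I_m -> 'M[R]_n) (b : 'I_m -> 'cV[R]_n) (x : 'cV[R]_n) : 'cV[R]_m :=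
  \col_(i < m) ((2%:R)^-1 * (x^T *m A i *m x) 0 0 + ((b i)^T *m x) 0 0).

Definition quadjac (R : realType) (m n : nat)
  (A : 'I_m -> 'M[R]_n) (b : 'I_m -> 'cV[R]_n) (x : 'cV[R]_n) : 'M[R]_(m, n) :=
  \matrix_(i < m, j < n) ((A i *m x + b i) j 0).

Definition linpart (R : realType) (m n : nat) (b : 'I_m -> 'cV[R]_n) : 'M[R]_(m, n) :=
  \matrix_(i < m, j < n) (b i j 0).

(* mu is the smallest singular value of H : 'M_(m,n) with m <= n:
   the singular values are the nonnegative square roots of the eigenvalues
   of H H^T, and mu is the smallest one. *)
Definition smallest_singular_value (R : realType) (m n : nat)
  (H : 'M[R]_(m, n)) (mu : R) : Prop :=
  0 <= mu /\ eigenvalue (H *m H^T) (mu ^+ 2) /\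
  forall a : R, eigenvalue (H *m H^T) a -> mu ^+ 2 <= a.

(* Main.v *)
Require Import Defs.
From HB Require Import structures.
From mathcomp Require Import all_boot all_order all_algebra.
From mathcomp Require Import boolp classical_sets functions reals topology normedtype sequences.
From mathcomp Require Import ring lra.
Import Order.TTheory GRing.Theory Num.Theory.
Set Implicit Arguments. Unset Strict Implicit. Unset Printing Implicit Defensive.
Local Open Scope ring_scope.

Section Alg.
Variable R : realType.

Definition dot k (u v : 'cV[R]_k) : R := (u^T *m v) 0 0.

Lemma dotE k (u v : 'cV[R]_k) : dot u v = \sum_i u i 0 * v i 0.
Proof. by rewrite /dot mxE; apply: eq_bigr => i _; rewrite mxE. Qed.

Lemma dotC k (u v : 'cV[R]_k) : dot u v = dot v u.
Proof. by rewrite !dotE; apply: eq_bigr => i _; rewrite mulrC. Qed.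

Lemma dotDr k (u v w : 'cV[R]_k) : dot u (v + w) = dot u v + dot u w.
Proof. by rewrite !dotE -big_split; apply: eq_bigr => i _; rewrite mxE mulrDr. Qed.

Lemma dotZr k a (u v : 'cV[R]_k) : dot u (a *: v) = a * dot u v.
Proof. by rewrite !dotE mulr_sumr; apply: eq_bigr => i _; rewrite mxE mulrCA. Qed.

Lemma dotNr k (u v : 'cV[R]_k) : dot u (- v) = - dot u v.
Proof. by rewrite -scaleN1r dotZr mulN1r. Qed.

Lemma dotBr k (u v w : 'cV[R]_k) : dot u (v - w) = dot u v - dot u w.
Proof. by rewrite dotDr dotNr. Qed.

Lemma dotDl k (u v w : 'cV[R]_k) : dot (v + w) u = dot v u + dot w u.
Proof. by rewrite dotC dotDr -!(dotC u). Qed.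

Lemma dotZl k a (u v : 'cV[R]_k) : dot (a *: v) u = a * dot v u.
Proof. by rewrite dotC dotZr dotC. Qed.

Lemma dotBl k (u v w : 'cV[R]_k) : dot (v - w) u = dot v u - dot w u.
Proof. by rewrite dotC dotBr -!(dotC u). Qed.

Lemma dot0r k (u : 'cV[R]_k) : dot u 0 = 0.
Proof. by rewrite dotE big1 // => i _; rewrite mxE mulr0. Qed.

Lemma dot_ge0 k (u : 'cV[R]_k) : 0 <= dot u u.
Proof. by rewrite dotE sumr_ge0 // => i _; rewrite -expr2 sqr_ge0. Qed.

Lemma dot_eq0 k (u : 'cV[R]_k) : dot u u = 0 -> u = 0.
Proof.
rewrite dotE => /eqP; rewrite psumr_eq0 => [/allP H|i _]; last by rewrite -expr2 sqr_ge0.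
apply/matrixP => i j; rewrite ord1 mxE.
have := H i (mem_index_enum _); rewrite /= mulf_eq0 orbb => /eqP //.
Qed.

Lemma form_sym k (P : 'M[R]_k) (u v : 'cV[R]_k) : P^T = P -> dot (P *m u) v = dot u (P *m v).
Proof. by move=> HP; rewrite /dot trmx_mul HP mulmxA. Qed.

Lemma vnormE k (u : 'cV[R]_k) : vnorm u = Num.sqrt (dot u u).
Proof. by rewrite /vnorm dotE; congr Num.sqrt; apply: eq_bigr => i _; rewrite expr2. Qed.

Lemma vnorm_ge0 k (u : 'cV[R]_k) : 0 <= vnorm u.
Proof. by rewrite vnormE sqrtr_ge0. Qed.

Lemma vnorm_sq k (u : 'cV[R]_k) : vnorm u ^+ 2 = dot u u.
Proof. by rewrite vnormE sqr_sqrtr // dot_ge0. Qed.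

Lemma vnorm_eq0 k (u : 'cV[R]_k) : vnorm u = 0 -> u = 0.
Proof. by move=> H; apply: dot_eq0; rewrite -vnorm_sq H expr0n. Qed.

Lemma vnorm0 k : vnorm (0 : 'cV[R]_k) = 0.
Proof. by rewrite vnormE dot0r sqrtr0. Qed.

Lemma quad_cs (a bb c : R) : 0 <= c ->
  (forall t, 0 <= a + 2 * t * bb + t ^+ 2 * c) -> bb ^+ 2 <= a * c.
Proof.
move=> c0 H; have a0 : 0 <= a by have := H 0; rewrite !(mulr0, mul0r, expr0n, addr0).
have [cpos|] := ltP 0 c.
  have := H (- bb / c); set t := - bb / c => Ht.
  have tc : t * c = - bb by rewrite /t divfK // gt_eqF.
  nra.
rewrite le_eqVlt ltNge c0 orbF => /eqP c00; subst c.
have [->|bn0] := eqVneq bb 0; first by rewrite expr0n mulr0.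
have := H (- (a + 1) / (2 * bb)); set t := - (a + 1) / (2 * bb) => Ht.
have tb : 2 * t * bb = - (a + 1) by rewrite /t; field; rewrite bn0.
nra.
Qed.

Lemma form_cs k (P : 'M[R]_k) (u v : 'cV[R]_k) : P^T = P ->
  (forall z, 0 <= dot z (P *m z)) ->
  dot u (P *m v) ^+ 2 <= dot u (P *m u) * dot v (P *m v).
Proof.
move=> HP Hpsd; apply: quad_cs; first exact: Hpsd.
move=> t; have := Hpsd (u + t *: v).
rewrite mulmxDr -scalemxAr !dotDr !dotDl !dotZr !dotZl.
rewrite (dotC v (P *m u)) form_sym //.
set x := dot u (P *m v); lra.
Qed.

Lemma cs2 k (u v : 'cV[R]_k) : dot u v ^+ 2 <= dot u u * dot v v.
Proof.
have := @form_cs k 1%:M u v; rewrite !mul1mx; apply; first by rewrite tr_scalar_mx.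
by move=> z; rewrite mul1mx dot_ge0.
Qed.

Lemma cs k (u v : 'cV[R]_k) : dot u v <= vnorm u * vnorm v.
Proof.
rewrite !vnormE -sqrtrM ?dot_ge0 //; apply: le_trans (ler_norm _) _.
by rewrite -sqrtr_sqr ler_wsqrtr // cs2.
Qed.

Lemma vnormD k (u v : 'cV[R]_k) : vnorm (u + v) <= vnorm u + vnorm v.
Proof.
rewrite {1}vnormE -[vnorm u + vnorm v]ger0_norm ?addr_ge0 ?vnorm_ge0 //.
rewrite -sqrtr_sqr ler_wsqrtr // dotDl !dotDr sqrrD !vnorm_sq (dotC v u).
have := cs u v; lra.
Qed.

Lemma vnormZ k a (u : 'cV[R]_k) : vnorm (a *: u) = `|a| * vnorm u.
Proof. by rewrite !vnormE dotZl dotZr mulrA -expr2 sqrtrM ?sqr_ge0 // sqrtr_sqr. Qed.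

Lemma vnormN k (u : 'cV[R]_k) : vnorm (- u) = vnorm u.
Proof. by rewrite -scaleN1r vnormZ normrN normr1 mul1r. Qed.

Lemma vnormB k (u v : 'cV[R]_k) : vnorm (u - v) = vnorm (v - u).
Proof. by rewrite -vnormN opprB. Qed.

End Alg.
From HB Require Import structures.
From mathcomp Require Import all_boot all_order all_algebra.
From mathcomp Require Import boolp classical_sets functions reals topology normedtype sequences.
From mathcomp Require Import ring lra.
Import Order.TTheory GRing.Theory Num.Theory.
Set Implicit Arguments. Unset Strict Implicit. Unset Printing Implicit Defensive.
Local Open Scope ring_scope.
Local Open Scope classical_set_scope.

Section Alg2.
Variable R : realType.

Definition frob p q (N : 'M[R]_(p, q)) : R := Num.sqrt (\sum_i \sum_j N i j ^+ 2).

Lemma frob_ge0 p q (N : 'M[R]_(p, q)) : 0 <= frob N.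
Proof. exact: sqrtr_ge0. Qed.

Lemma frob_bound p q (N : 'M[R]_(p, q)) (v : 'cV[R]_q) :
  vnorm (N *m v) <= frob N * vnorm v.
Proof.
rewrite !vnormE /frob -sqrtrM; last by rewrite sumr_ge0 // => i _; rewrite sumr_ge0 // => j _; rewrite sqr_ge0.
apply: ler_wsqrtr; rewrite [dot (N *m v) _]dotE mulr_suml; apply: ler_sum => i _.
pose r : 'cV[R]_q := (row i N)^T.
have -> : (N *m v) i 0 = dot r v by rewrite dotE mxE; apply: eq_bigr => j _; rewrite !mxE.
have -> : \sum_j N i j ^+ 2 = dot r r by rewrite dotE; apply: eq_bigr => j _; rewrite !mxE expr2.
rewrite -expr2; exact: cs2.
Qed.

Lemma spnorm_bound p q (N : 'M[R]_(p, q)) (v : 'cV[R]_q) :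
  vnorm (N *m v) <= spnorm N * vnorm v.
Proof.
set E := [set r | exists v : 'cV[R]_q, vnorm v <= 1 /\ r = vnorm (N *m v)].
have ubE : has_ubound E.
  exists (frob N) => r [w [w1 ->]].
  by apply: le_trans (frob_bound N w) _; rewrite -[leRHS]mulr1 ler_wpM2l ?frob_ge0.
have supE : forall w0, vnorm w0 <= 1 -> vnorm (N *m w0) <= spnorm N.
  by move=> w0 w1; apply: (ub_le_sup ubE); exists w0.
have [v0|vn0] := eqVneq (vnorm v) 0.
  by rewrite v0 mulr0 (vnorm_eq0 v0) mulmx0 vnorm0.
have vpos : 0 < vnorm v by rewrite lt_def vn0 vnorm_ge0.
have := supE ((vnorm v)^-1 *: v).
rewrite vnormZ ger0_norm ?invr_ge0 ?vnorm_ge0 // mulVf // lexx => /(_ isT).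
by rewrite -scalemxAr vnormZ ger0_norm ?invr_ge0 ?vnorm_ge0 // ler_pdivrMl // mulrC.
Qed.

Lemma min_eig k (M : 'M[R]_k) c : M^T = M -> (forall z, 0 <= dot z (M *m z)) ->
  (forall a, eigenvalue M a -> c <= a) -> forall z, c * dot z z <= dot z (M *m z).
Proof.
move=> HM Hpsd Heig.
case: k M HM Hpsd Heig => [|k] M HM Hpsd Heig z.
  by rewrite !dotE !big_ord0 mulr0.
set S := [set t | forall z, t * dot z z <= dot z (M *m z)].
pose e : 'cV[R]_k.+1 := delta_mx 0 0.
have ee : dot e e = 1.
  rewrite dotE (bigD1 0) //= big1 ?addr0; first by rewrite !mxE eqxx mulr1.
  by move=> i /negbTE i0; rewrite !mxE i0 mul0r.
have ubS : has_ubound S by exists (dot e (M *m e)) => t /(_ e); rewrite ee mulr1.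
have S0 : S 0 by move=> w; rewrite mul0r Hpsd.
have neS : S !=set0 by exists 0.
set lam := sup S.
have Slam : S lam.
  move=> w; rewrite leNgt; apply/negP => Hw.
  have [w0|wn0] := eqVneq (dot w w) 0.
    by move: Hw; rewrite (dot_eq0 w0) mulmx0 !dot0r mulr0 ltxx.
  have wpos : 0 < dot w w by rewrite lt_def wn0 dot_ge0.
  have : dot w (M *m w) / dot w w < lam by rewrite ltr_pdivrMr.
  move/(sup_gt neS) => [t St ltt].
  have := St w; rewrite leNgt => /negP; apply.
  by move: ltt; rewrite ltr_pdivrMr.
have Hlam : eigenvalue M lam.
  case: (boolP (eigenvalue M lam)) => // Hne; exfalso.
  have Pu : (M - lam%:M) \in unitmx.
    by rewrite -row_free_unit -kermx_eq0; exact: negbNE Hne.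
  set P := M - lam%:M.
  have PE : forall w, dot w (P *m w) = dot w (M *m w) - lam * dot w w.
    by move=> w; rewrite /P mulmxBl mul_scalar_mx dotBr dotZr.
  have Ppsd : forall w, 0 <= dot w (P *m w) by move=> w; rewrite PE subr_ge0 Slam.
  have PT : P^T = P by rewrite /P linearB /= tr_scalar_mx HM.
  set K := frob (invmx P) + 1.
  have Kpos : 0 < K by rewrite /K ltr_wpDl ?frob_ge0.
  have key : forall w, dot w w <= K * dot w (P *m w).
    move=> w; set u := invmx P *m w.
    have Pu_w : P *m u = w by rewrite /u mulKVmx.
    have h1 := form_cs u w PT Ppsd.
    rewrite Pu_w -(form_sym u w PT) Pu_w in h1.
    have h2 : dot u w <= K * dot w w.
      apply: le_trans (cs u w) _.
      apply: le_trans (_ : frob (invmx P) * vnorm w * vnorm w <= _).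
        by rewrite ler_wpM2r ?vnorm_ge0 // frob_bound.
      by rewrite -mulrA -expr2 vnorm_sq ler_wpM2r ?dot_ge0 // /K lerDl.
    have := dot_ge0 w; have := Ppsd w; have := dot_ge0 u.
    rewrite (dotC u w) in h1 h2.
    have [w0|wn0] := eqVneq (dot w w) 0; first by rewrite w0; nra.
    have wpos : 0 < dot w w by rewrite lt_def wn0 dot_ge0.
    nra.
  have : S (lam + K^-1).
    move=> w; rewrite mulrDl.
    have := key w; have := PE w; rewrite -ler_pdivrMl // mulrC.
    lra.
  move/(ub_le_sup ubS); rewrite -/lam gerDl leNgt invr_gt0 Kpos //.
have := Heig _ Hlam => clam.
apply: le_trans (Slam z); by rewrite ler_wpM2r ?dot_ge0.
Qed.

End Alg2.
From HB Require Import structures.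
From mathcomp Require Import all_boot all_order all_algebra.
From mathcomp Require Import boolp classical_sets functions reals topology normedtype sequences.
From mathcomp Require Import ring lra.
Import Order.TTheory GRing.Theory Num.Theory.
Set Implicit Arguments. Unset Strict Implicit. Unset Printing Implicit Defensive.
Import numFieldNormedType.Exports.
Local Open Scope ring_scope.
Local Open Scope classical_set_scope.

Section Jac.
Variable R : realType.

Definition Jm m n (A : 'I_m -> 'M[R]_n) (d : 'cV[R]_n) : 'M[R]_(m, n) :=
  \matrix_(i < m, j < n) (A i *m d) j 0.

Definition Qm m n (A : 'I_m -> 'M[R]_n) (u : 'cV[R]_n) : 'cV[R]_m :=
  \col_(i < m) (2^-1 * dot u (A i *m u)).

Lemma quadjac_diff m n (A : 'I_m -> 'M[R]_n) b x x' :
  quadjac A b x - quadjac A b x' = Jm A (x - x').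
Proof. by apply/matrixP => i j; rewrite [in RHS]mxE mulmxBr !mxE; ring. Qed.

Lemma Jm_mulE m n (A : 'I_m -> 'M[R]_n) d w i : (Jm A d *m w) i 0 = dot (A i *m d) w.
Proof. by rewrite dotE mxE; apply: eq_bigr => j _; rewrite /Jm mxE. Qed.

Lemma quadmapE m n (A : 'I_m -> 'M[R]_n) b x :
  quadmap A b x = Qm A x + linpart b *m x.
Proof.
apply/matrixP => i j; rewrite ord1 !mxE /dot mulmxA; congr (_ + _); first by rewrite mxE.
by apply: eq_bigr => k _; rewrite !mxE.
Qed.

Lemma Qm0 m n (A : 'I_m -> 'M[R]_n) : Qm A 0 = 0.
Proof. by apply/matrixP => i j; rewrite !mxE mulmx0 dot0r mulr0. Qed.

Lemma QmB m n (A : 'I_m -> 'M[R]_n) u v : (forall i, (A i)^T = A i) ->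
  Qm A u - Qm A v = Jm A (2^-1 *: (u + v)) *m (u - v).
Proof.
move=> HA; apply/matrixP => i j; rewrite ord1 Jm_mulE !mxE.
rewrite -scalemxAr mulmxDr dotZl dotDl !dotBr.
rewrite (dotC (A i *m u) u) (dotC (A i *m v) u) (form_sym u v (HA i)) (dotC (A i *m v) v).
ring.
Qed.

Lemma Jbound m n (A : 'I_m -> 'M[R]_n) b L :
  (forall x x' : 'cV[R]_n,
      spnorm (quadjac A b x - quadjac A b x') <= L * vnorm (x - x')) ->
  forall d w, vnorm (Jm A d *m w) <= L * vnorm d * vnorm w.
Proof.
move=> HL d w; apply: le_trans (spnorm_bound _ _) _.
rewrite ler_wpM2r ?vnorm_ge0 //.
by have := HL d 0; rewrite quadjac_diff !subr0.
Qed.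

Lemma Qbound m n (A : 'I_m -> 'M[R]_n) b L :
  (forall i, (A i)^T = A i) -> 0 <= L ->
  (forall x x' : 'cV[R]_n,
      spnorm (quadjac A b x - quadjac A b x') <= L * vnorm (x - x')) ->
  forall u v, vnorm (Qm A u - Qm A v) <= L * (2^-1 * (vnorm u + vnorm v)) * vnorm (u - v).
Proof.
move=> HA L0 HL u v; rewrite QmB //; apply: le_trans (Jbound HL _ _) _.
rewrite ler_wpM2r ?vnorm_ge0 // ler_wpM2l // vnormZ ger0_norm ?invr_ge0 ?ler0n //.
by rewrite ler_wpM2l ?invr_ge0 ?ler0n // vnormD.
Qed.

Lemma entry_le k (v : 'cV[R]_k) i : `|v i 0| <= `|v|.
Proof.
rewrite [leRHS]/Num.Def.normr /= mx_normrE.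
exact: (le_bigmax 0 (fun ij : 'I_k * 'I_1 => `|v ij.1 ij.2|) (i, 0)).
Qed.

Lemma entry_le_vnorm k (v : 'cV[R]_k) i : `|v i 0| <= vnorm v.
Proof.
rewrite vnormE -sqrtr_sqr ler_wsqrtr // dotE (bigD1 i) //= -expr2 lerDl.
by rewrite sumr_ge0 // => j _; rewrite -expr2 sqr_ge0.
Qed.

Lemma mx_le_vnorm k (v : 'cV[R]_k) : `|v| <= vnorm v.
Proof.
rewrite [leLHS]/Num.Def.normr /= mx_normrE; apply: bigmax_le; first exact: vnorm_ge0.
by move=> [i j] _ /=; rewrite ord1 entry_le_vnorm.
Qed.

Lemma vnorm_le_mx k (v : 'cV[R]_k) : vnorm v <= k%:R * `|v|.
Proof.
rewrite vnormE -[leRHS]ger0_norm ?mulr_ge0 ?ler0n // -sqrtr_sqr ler_wsqrtr //.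
rewrite dotE; apply: le_trans (_ : \sum_(i < k) `|v| ^+ 2 <= _).
  apply: ler_sum => i _; rewrite -expr2 -real_normK ?num_real //.
  have := entry_le v i; have := normr_ge0 (v i 0); nra.
rewrite sumr_const card_ord.
have -> : `|v| ^+ 2 *+ k = k%:R * `|v| ^+ 2 by rewrite mulr_natl.
rewrite exprMn.
have := normr_ge0 v; have : (k%:R : R) <= k%:R ^+ 2.
  by rewrite expr2 -natrM ler_nat; case: k {v} => // k; rewrite leq_pmulr.
nra.
Qed.

Lemma vnorm_cont k (x : 'cV[R]_k) : vnorm y @[y --> x] --> vnorm x.
Proof.
apply/(@cvgrPdist_lt _ _ _ (nbhs x) (@nbhs_filter _ x)) => e e0.
have kpos : 0 < k%:R + 1 :> R by rewrite ltr_wpDl ?ler0n.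
have /cvgrPdist_lt /(_ (e / (k%:R + 1))) := @cvg_id _ (nbhs x).
rewrite divr_gt0 // => /(_ isT); apply: filterS => y hy.
have h1 : `|vnorm x - vnorm y| <= vnorm (x - y).
  rewrite ler_norml; apply/andP; split.
    have := vnormD (y - x) x; rewrite subrK (vnormB y x); lra.
  have := vnormD (x - y) y; rewrite subrK; lra.
apply: le_lt_trans h1 _; apply: le_lt_trans (vnorm_le_mx _) _.
apply: le_lt_trans (_ : (k%:R + 1) * `|x - y| < _).
  by rewrite ler_wpM2r ?normr_ge0 // lerDl.
by rewrite mulrC -ltr_pdivlMr.
Qed.

End Jac.
From HB Require Import structures.
From mathcomp Require Import all_boot all_order all_algebra.
From mathcomp Require Import boolp classical_sets functions reals topology normedtype sequences.
From mathcomp Require Import ring lra.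
Import Order.TTheory GRing.Theory Num.Theory.
Set Implicit Arguments. Unset Strict Implicit. Unset Printing Implicit Defensive.
Import numFieldNormedType.Exports.
Local Open Scope ring_scope.
Local Open Scope classical_set_scope.

HB.instance Definition _ (R : realType) (m n : nat) :=
  Complete.copy 'M[R]_(m, n) 'M[R]_(m, n).

Theorem theorem5 (R : realType) (m n : nat)
  (A : 'I_m -> 'M[R]_n) (b : 'I_m -> 'cV[R]_n)
  (mu0 L : R) :
  (m <= n)%N ->
  (forall i, (A i)^T = A i) ->
  \rank (linpart b) = m ->
  0 < mu0 ->
  smallest_singular_value (linpart b) mu0 ->
  0 < L ->
  (forall x x' : 'cV[R]_n,
      spnorm (quadjac A b x - quadjac A b x') <= L * vnorm (x - x')) ->
  forall y : 'cV[R]_m, vnorm y < mu0 ^+ 2 / (4%:R * L) ->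
  exists x : 'cV[R]_n, quadmap A b x = y /\ vnorm x <= mu0 / (2%:R * L).
Proof.
move=> mn HA Hrank mu0pos [mu0ge0 [Heigmu Hmin]] Lpos HL y Hy.
set H := linpart b.
set M := H *m H^T.
have MT : M^T = M by rewrite /M trmx_mul trmxK.
have Mform : forall z, dot z (M *m z) = dot (H^T *m z) (H^T *m z).
  by move=> z; rewrite /M /dot trmx_mul trmxK !mulmxA.
have Mpsd : forall z, 0 <= dot z (M *m z) by move=> z; rewrite Mform dot_ge0.
have Mlow : forall z, mu0 ^+ 2 * dot z z <= dot z (M *m z) := min_eig MT Mpsd Hmin.
have Mu : M \in unitmx.
  case: (boolP (eigenvalue M 0)) => [/Hmin|Hne].
    by rewrite leNgt exprn_gt0.
  have -> : M = M - 0%:M by apply/matrixP => i j; rewrite !mxE; case: (i == j); rewrite /= ?mulr1n ?mulr0n subr0.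
  by rewrite -row_free_unit -kermx_eq0; exact: negbNE Hne.
set N := invmx M.
set Pinv := H^T *m N.
have HP : H *m Pinv = 1%:M by rewrite /Pinv mulmxA mulmxV.
have Pbound : forall z, vnorm (Pinv *m z) * mu0 <= vnorm z.
  move=> z; set w := N *m z.
  have Mw : M *m w = z by rewrite /w mulKVmx.
  have e1 : vnorm (Pinv *m z) ^+ 2 = dot w z.
    by rewrite vnorm_sq /Pinv -mulmxA -/w -Mform Mw.
  have e2 : mu0 ^+ 2 * vnorm w ^+ 2 <= dot w z by rewrite vnorm_sq; have := Mlow w; rewrite Mw.
  have e3 := cs w z.
  have a0 := vnorm_ge0 w; have c0 := vnorm_ge0 z; have p0 := vnorm_ge0 (Pinv *m z).
  have h : mu0 ^+ 2 * vnorm w <= vnorm z.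
    have [->|an0] := eqVneq (vnorm w) 0; first by rewrite mulr0.
    have apos : 0 < vnorm w by rewrite lt_def an0 a0.
    nra.
  nra.
pose T z := y - Qm A (Pinv *m z).
set rho := mu0 / (2%:R * L).
have rhoE : 2 * L * rho = mu0 by rewrite /rho; field; rewrite gt_eqF.
have rho0 : 0 < rho by rewrite /rho divr_gt0 // mulr_gt0.
set r := mu0 * rho.
have HyE : vnorm y < mu0 * rho / 2.
  by move: Hy; rewrite /rho; congr (_ < _); field; rewrite gt_eqF.
pose U := [set z : 'cV[R]_m | vnorm z <= r].
have PU : forall z, U z -> vnorm (Pinv *m z) <= rho.
  move=> z Uz; have := Pbound z; rewrite /U /= /r in Uz; nra.
have QB := Qbound HA (ltW Lpos) HL.
have TU : forall z, U z -> U (T z).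
  move=> z Uz; rewrite /U /= /T /r.
  apply: le_trans (vnormD _ _) _; rewrite vnormN.
  have := QB (Pinv *m z) 0; rewrite Qm0 subr0 vnorm0 addr0 subr0.
  set s := vnorm (Pinv *m z).
  have s0 : 0 <= s := vnorm_ge0 _.
  have sr : s <= rho := PU z Uz.
  have k0 : L * (s * s) <= L * (rho * rho).
    by rewrite ler_wpM2l ?(ltW Lpos) //; nra.
  have k1 : L * (rho * rho) = mu0 * rho / 2.
    by rewrite -rhoE; field.
  have k2 : L * (2^-1 * s) * s = 2^-1 * (L * (s * s)) by ring.
  rewrite k2; nra.
have TC : forall z w, U z -> U w -> vnorm (T z - T w) <= 2^-1 * vnorm (z - w).
  move=> z w Uz Uw.
  have -> : T z - T w = Qm A (Pinv *m w) - Qm A (Pinv *m z).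
    by rewrite /T opprB addrC addrA subrK.
  apply: le_trans (QB _ _) _.
  rewrite -mulmxBr.
  have ht := Pbound (w - z); rewrite (vnormB w z) in ht.
  have s1 := PU z Uz; have s2 := PU w Uw.
  have t0 := vnorm_ge0 (Pinv *m (w - z)).
  apply: le_trans (_ : (mu0 / 2) * vnorm (Pinv *m (w - z)) <= _).
    rewrite ler_wpM2r //.
    have : L * (vnorm (Pinv *m w) + vnorm (Pinv *m z)) <= L * (2 * rho).
      by rewrite ler_wpM2l ?(ltW Lpos) //; lra.
    rewrite -rhoE; lra.
  nra.
have iterU : forall j z, U z -> U (iter j T z).
  by elim=> [|j IH] z Uz //=; apply: TU; apply: IH.
have iterC : forall j z w, U z -> U w ->
    vnorm (iter j T z - iter j T w) <= (2^-1) ^+ j * vnorm (z - w).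
  elim=> [|j IH] z w Uz Uw /=; first by rewrite expr0 mul1r.
  apply: le_trans (TC _ _ (iterU _ _ Uz) (iterU _ _ Uw)) _.
  by rewrite exprS -mulrA ler_wpM2l ?invr_ge0 ?ler0n // IH.
have TkU : {homo iter m T : x / U x >-> U x} := fun z Uz => iterU m z Uz.
set q := m%:R * (2^-1) ^+ m : R.
have q0 : 0 <= q by rewrite /q mulr_ge0 ?exprn_ge0 ?invr_ge0 ?ler0n.
have q1 : q < 1.
  rewrite /q exprVn ltr_pdivrMr ?exprn_gt0 // mul1r -natrX ltr_nat.
  exact: ltn_expl.
have ctr : is_contraction (mkfun TkU).
  exists (interval_inference.NngNum q0); split => //=.
  move=> [z w] [/= Uz Uw].
  apply: le_trans (mx_le_vnorm _) _; apply: le_trans (iterC m z w Uz Uw) _.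
  rewrite /q [m%:R * _]mulrC -mulrA ler_wpM2l ?exprn_ge0 ?invr_ge0 ?ler0n //.
  exact: vnorm_le_mx.
have clU : closed U.
  have -> : U = (fun z => vnorm z) @^-1` [set x | x <= r] by [].
  apply: preimage_closed; last exact: closed_le.
  by move=> z _; exact: vnorm_cont.
have neU : U !=set0 by exists 0; rewrite /U /= vnorm0 /r mulr_ge0 // ltW.
have [p Up pE] := banach_fixed_point ctr clU neU.
have pE' : iter m T p = p := esym pE.
have TpU := TU p Up.
have Tfix : T p = p.
  apply: esym; apply: (contraction_fixpoint_unique ctr Up TpU pE).
  change (T p = iter m T (T p)); by rewrite -iterSr iterS pE'.
exists (Pinv *m p); split; last exact: PU.
rewrite quadmapE mulmxA HP mul1mx.
by rewrite -{2}Tfix /T addrC subrK.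
Qed.
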